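(* Let $M:\mathcal{T}\to\mathcal{Q}$ be a morphism of algebraic theories. The following are equivalent: (1) $M$ is a Lawvere covariety, i.e. a general cosolution in $\mathbf{AlgTh}$ of some cosystem of Lawvere equations; (2) $M$ is isomorphic to the canonical morphism $\mathcal{T}\to\mathcal{T}/{\sim}$ for some congruence $\sim$ on $\mathcal{T}$ (i.e. $M=N\circ C$ with $C:\mathcal{T}\to\mathcal{T}/{\sim}$ canonical and $N$ an isomorphism of theories); (3) $M$ is a coequalizer in $\mathbf{AlgTh}$ of some reflexive pair $P,Q$ forming a Lawvere equation.
   Context: An algebraic theory is a small category with finite products; $\mathbf{AlgTh}$ is the category of algebraic theories with finite-product-preserving functors (morphisms of theories) as morphisms. An equation $f\approx g$ is a pair of parallel morphisms. A cosystem of equations is a non-empty set of equations with a common codomain $A$. A cosolution is a morphism $a$ with domain $A$ with $af=ag$ for all $f\approx g$ in the cosystem; a general cosolution is a cosolution $v$ such that every cosolution $a$ factors uniquely as $a=\tilde a v$. A Lawvere equation is an equation $P\approx Q$ in $\mathbf{AlgTh}$ ($P,Q:\mathcal{T}'\to\mathcal{T}$) such that there exists a morphism of theories $U:\mathcal{T}''\to\mathcal{T}'$ which is surjective on objects and satisfies $PU=QU$. A pair $P,Q:\mathcal{T}'\to\mathcal{T}$ is reflexive if there is a morphism of theories $S:\mathcal{T}\to\mathcal{T}'$ with $PS=QS=1_{\mathcal{T}}$. A congruence on an algebraic theory $\mathcal{T}$ is an equivalence relation $\sim$ on the morphisms of $\mathcal{T}$ relating only parallel morphisms, compatible with composition (if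 $f\sim f'$, $g\sim g'$ and $gf$ is defined then $gf\sim g'f'$) and with finite products (if $f_i\sim g_i:X\to Y_i$ for $i=1,\dots,n$ then $\langle f_1,\dots,f_n\rangle\sim\langle g_1,\dots,g_n\rangle$). $\mathcal{T}/{\sim}$ has the same objects as $\mathcal{T}$ and $\sim$-classes of morphisms as morphisms; the canonical morphism $\mathcal{T}\to\mathcal{T}/{\sim}$ is the identity on objects and sends a morphism to its class. *)

(* Defs.v *)
From Stdlib Require Import FunctionalExtensionality PropExtensionality
  ProofIrrelevance IndefiniteDescription.
From mathcomp Require Import all_boot.

Set Implicit Arguments.
Unset Strict Implicit.
Unset Printing Implicit Defensive.

Record Cat := MkCat {
  ob : Type;
  hom : ob -> ob -> Type;
  cmp : forall x y z, hom y z -> hom x y -> hom x z;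
  idm : forall x, hom x x;
  cmpA : forall x y z w (h : hom z w) (g : hom y z) (f : hom x y),
      cmp (cmp h g) f = cmp h (cmp g f);
  cmp1l : forall x y (f : hom x y), cmp (idm y) f = f;
  cmp1r : forall x y (f : hom x y), cmp f (idm x) = f }.
Arguments ob : clear implicits.
Arguments hom : clear implicits.
Arguments cmp {c x y z}.
Arguments idm {c}.

Definition is_prod (C : Cat) (n : nat) (Y : 'I_n -> ob C) (P : ob C)
    (p : forall i, hom C P (Y i)) : Prop :=
  forall (X : ob C) (f : forall i, hom C X (Y i)),
    exists! h : hom C X P, forall i, cmp (p i) h = f i.

Arguments is_prod {C n} Y P p.

Definition has_finite_products (C : Cat) : Prop :=
  forall (n : nat) (Y : 'I_n -> ob C),
    exists (P : ob C) (p : forall i, hom C P (Y i)), is_prod Y P p.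

Record Theory := MkTheory { th_cat :> Cat; th_prod : has_finite_products th_cat }.

Record Functor (C D : Cat) := MkFunctor {
  fobj :> ob C -> ob D;
  fmap : forall x y, hom C x y -> hom D (fobj x) (fobj y);
  fmap_id : forall x, fmap (idm x) = idm (fobj x);
  fmap_cmp : forall x y z (g : hom C y z) (f : hom C x y),
      fmap (cmp g f) = cmp (fmap g) (fmap f) }.
Arguments fmap {C D} f {x y} _ : rename.

Definition preserves_products (C D : Cat) (F : Functor C D) : Prop :=
  forall (n : nat) (Y : 'I_n -> ob C) (P : ob C) (p : forall i, hom C P (Y i)),
    is_prod Y P p -> is_prod (fun i => F (Y i)) (F P) (fun i => fmap F (p i)).

Lemma fcomp_id (C D E : Cat) (G : Functor D E) (F : Functor C D) x :
  fmap G (fmap F (idm x)) = idm (G (F x)).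
Proof. by rewrite fmap_id fmap_id. Qed.

Lemma fcomp_cmp (C D E : Cat) (G : Functor D E) (F : Functor C D)
  x y z (g : hom C y z) (f : hom C x y) :
  fmap G (fmap F (cmp g f)) = cmp (fmap G (fmap F g)) (fmap G (fmap F f)).
Proof. by rewrite fmap_cmp fmap_cmp. Qed.

Definition fcomp (C D E : Cat) (G : Functor D E) (F : Functor C D) : Functor C E :=
  @MkFunctor C E (fun x => G (F x)) (fun x y f => fmap G (fmap F f))
    (@fcomp_id C D E G F) (@fcomp_cmp C D E G F).

Definition fid (C : Cat) : Functor C C :=
  @MkFunctor C C (fun x => x) (fun x y f => f) (fun x => erefl) (fun _ _ _ _ _ => erefl).

Record TheoryMor (T T' : Theory) := MkTheoryMor {
  tfun :> Functor T T';
  tpres : preserves_products tfun }.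

Lemma preserves_comp (C D E : Cat) (G : Functor D E) (F : Functor C D) :
  preserves_products G -> preserves_products F -> preserves_products (fcomp G F).
Proof. move=> hG hF n Y P p hp; exact: (hG _ _ _ _ (hF _ _ _ _ hp)). Qed.


Definition tcomp (T1 T2 T3 : Theory) (G : TheoryMor T2 T3) (F : TheoryMor T1 T2) :
  TheoryMor T1 T3 := @MkTheoryMor T1 T3 (fcomp G F) (@preserves_comp T1 T2 T3 G F (@tpres T2 T3 G) (@tpres T1 T2 F)).

Lemma preserves_id (C : Cat) : preserves_products (fid C).
Proof. by move=> n Y P p hp. Qed.

Definition tid (T : Theory) : TheoryMor T T := @MkTheoryMor T T (fid T) (@preserves_id T).

Definition lawvere_equation (T' T : Theory) (P Q : TheoryMor T' T) : Prop :=
  exists (T'' : Theory) (U : TheoryMor T'' T'),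
    (forall y : ob T', exists x : ob T'', U x = y) /\ tcomp P U = tcomp Q U.

Definition reflexive_pair (T' T : Theory) (P Q : TheoryMor T' T) : Prop :=
  exists S : TheoryMor T T', tcomp P S = tid T /\ tcomp Q S = tid T.

Record Cosystem (A : Theory) := MkCosystem {
  cs_idx : Type;
  cs_nonempty : inhabited cs_idx;
  cs_dom : cs_idx -> Theory;
  cs_lhs : forall i, TheoryMor (cs_dom i) A;
  cs_rhs : forall i, TheoryMor (cs_dom i) A }.
Arguments cs_dom {A} c i.
Arguments cs_lhs {A} c i.
Arguments cs_rhs {A} c i.

Definition cosolution (A B : Theory) (S : Cosystem A) (a : TheoryMor A B) : Prop :=
  forall i, tcomp a (cs_lhs S i) = tcomp a (cs_rhs S i).

Definition general_cosolution (A V : Theory) (S : Cosystem A) (v : TheoryMor A V)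
  : Prop :=
  cosolution S v /\
  forall (B : Theory) (a : TheoryMor A B), cosolution S a ->
    exists! a' : TheoryMor V B, a = tcomp a' v.

Definition lawvere_covariety (T Q : Theory) (M : TheoryMor T Q) : Prop :=
  exists S : Cosystem T,
    (forall i, lawvere_equation (cs_lhs S i) (cs_rhs S i)) /\ general_cosolution S M.

Definition coequalizer (T' T V : Theory) (P Q : TheoryMor T' T) (M : TheoryMor T V)
  : Prop :=
  tcomp M P = tcomp M Q /\
  forall (B : Theory) (a : TheoryMor T B), tcomp a P = tcomp a Q ->
    exists! a' : TheoryMor V B, a = tcomp a' M.

Record congruence (C : Cat) := MkCongruence {
  crel :> forall x y, hom C x y -> hom C x y -> Prop;
  crefl : forall x y (f : hom C x y), crel f f;
  csym : forall x y (f g : hom C x y), crel f g -> crel g f;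
  ctrans : forall x y (f g h : hom C x y), crel f g -> crel g h -> crel f h;
  ccmp : forall x y z (f f' : hom C x y) (g g' : hom C y z),
      crel f f' -> crel g g' -> crel (cmp g f) (cmp g' f');
  cprod : forall (n : nat) (Y : 'I_n -> ob C) (P : ob C)
      (p : forall i, hom C P (Y i)), is_prod Y P p ->
      forall (X : ob C) (f g : forall i, hom C X (Y i)) (hf hg : hom C X P),
      (forall i, crel (f i) (g i)) ->
      (forall i, cmp (p i) hf = f i) -> (forall i, cmp (p i) hg = g i) ->
      crel hf hg }.
Arguments crel {C} c {x y}.

Section Quotient.
Variables (C : Cat) (R : congruence C).

(* morphisms of C/~ : ~-classes *)
Definition qhom (x y : ob C) : Type :=
  {K : hom C x y -> Prop | exists f : hom C x y, K = R _ _ f}.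

Definition qcl (x y : ob C) (f : hom C x y) : qhom x y :=
  exist _ (R _ _ f) (ex_intro _ f erefl).

Lemma qcl_eq (x y : ob C) (f g : hom C x y) : R _ _ f g -> qcl f = qcl g.
Proof.
move=> hfg; apply: eq_sig_hprop => [K|/=]; first exact: proof_irrelevance.
apply: functional_extensionality => h; apply: propositional_extensionality.
split=> H.
- exact: ctrans (csym hfg) H.
- exact: ctrans hfg H.
Qed.

Definition qrep (x y : ob C) (K : qhom x y) : hom C x y :=
  proj1_sig (constructive_indefinite_description _ (proj2_sig K)).

Lemma qrepK (x y : ob C) (K : qhom x y) : qcl (qrep K) = K.
Proof.
rewrite /qrep; case: constructive_indefinite_description => f hf /=.
apply: eq_sig_hprop => [L|/=]; first exact: proof_irrelevance.
by rewrite hf.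
Qed.

Lemma qrep_rel (x y : ob C) (f : hom C x y) : R _ _ (qrep (qcl f)) f.
Proof.
rewrite /qrep; case: constructive_indefinite_description => g /= hg.
have : R _ _ f g by rewrite hg; exact: crefl.
exact: csym.
Qed.

Definition qcmp (x y z : ob C) (g : qhom y z) (f : qhom x y) : qhom x z :=
  qcl (cmp (qrep g) (qrep f)).

Lemma qcmp_cl (x y z : ob C) (g : hom C y z) (f : hom C x y) :
  qcmp (qcl g) (qcl f) = qcl (cmp g f).
Proof. apply: qcl_eq; apply: ccmp; exact: qrep_rel. Qed.

Lemma qcmpA (x y z w : ob C) (h : qhom z w) (g : qhom y z) (f : qhom x y) :
  qcmp (qcmp h g) f = qcmp h (qcmp g f).
Proof.
rewrite -(qrepK h) -(qrepK g) -(qrepK f) !qcmp_cl.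
by rewrite cmpA.
Qed.

Lemma qcmp1l (x y : ob C) (f : qhom x y) : qcmp (qcl (idm y)) f = f.
Proof. by rewrite -(qrepK f) qcmp_cl cmp1l. Qed.

Lemma qcmp1r (x y : ob C) (f : qhom x y) : qcmp f (qcl (idm x)) = f.
Proof. by rewrite -(qrepK f) qcmp_cl cmp1r. Qed.

Definition quot_cat : Cat :=
  @MkCat (ob C) qhom qcmp (fun x => qcl (idm x)) qcmpA qcmp1l qcmp1r.

Definition quot_functor : Functor C quot_cat :=
  @MkFunctor C quot_cat (fun x => x) (fun x y f => qcl f)
    (fun x => erefl) (fun x y z g f => esym (qcmp_cl g f)).

End Quotient.

(* N : T' -> T is an isomorphism of theories (iso in AlgTh); stated for the
   underlying categories so that it applies to the quotient category T/~. *)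
Definition theory_iso (C D : Cat) (N : Functor C D) : Prop :=
  preserves_products N /\
  exists G : Functor D C,
    preserves_products G /\ fcomp G N = fid C /\ fcomp N G = fid D.

(* Main.v *)
From Stdlib Require Import FunctionalExtensionality PropExtensionality ProofIrrelevance IndefiniteDescription JMeq.
From mathcomp Require Import all_boot.
Require Import Defs.
Set Implicit Arguments. Unset Strict Implicit. Unset Printing Implicit Defensive.

Lemma functor_eq_conv (C D : Cat) (F G : Functor C D) :
  fobj F = fobj G -> (forall x y (f : hom C x y), JMeq (fmap F f) (fmap G f)) -> F = G.
Proof.
case: F => o1 m1 p1 q1; case: G => o2 m2 p2 q2 /= e; subst o2 => h.
have em : m1 = m2.
  apply: functional_extensionality_dep => x; apply: functional_extensionality_dep => y.
  apply: functional_extensionality => f; exact: JMeq_eq (h x y f).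
subst m2.
by rewrite (proof_irrelevance _ p1 p2) (proof_irrelevance _ q1 q2).
Qed.

Lemma functor_JMeq (C D : Cat) (F G : Functor C D) : F = G ->
  forall x y (f : hom C x y), JMeq (fmap F f) (fmap G f).
Proof. by move=> ->. Qed.

Lemma functor_obj (C D : Cat) (F G : Functor C D) : F = G -> forall x, F x = G x.
Proof. by move=> ->. Qed.

Lemma theorymor_eq (T T' : Theory) (F G : TheoryMor T T') : tfun F = tfun G -> F = G.
Proof.
case: F => F pF; case: G => G pG /= e; subst G.
by rewrite (proof_irrelevance _ pF pG).
Qed.

Lemma fcompA (A B C D : Cat) (H : Functor C D) (G : Functor B C) (F : Functor A B) :
  fcomp (fcomp H G) F = fcomp H (fcomp G F).
Proof. by apply: functor_eq_conv => // x y f. Qed.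

Lemma fcomp_idl (C D : Cat) (F : Functor C D) : fcomp (fid D) F = F.
Proof. by apply: functor_eq_conv => // x y f. Qed.

Lemma fcomp_idr (C D : Cat) (F : Functor C D) : fcomp F (fid C) = F.
Proof. by apply: functor_eq_conv => // x y f. Qed.

Lemma tcompA (A B C D : Theory) (H : TheoryMor C D) (G : TheoryMor B C) (F : TheoryMor A B) :
  tcomp (tcomp H G) F = tcomp H (tcomp G F).
Proof. apply: theorymor_eq; exact: fcompA. Qed.

Lemma tcomp_idl (C D : Theory) (F : TheoryMor C D) : tcomp (tid D) F = F.
Proof. apply: theorymor_eq; exact: fcomp_idl. Qed.

Lemma prod_transfer (C D : Cat) (F : Functor C D) n (Y : 'I_n -> ob C) P0 p0 P p :
  is_prod Y P0 p0 -> is_prod (fun i => F (Y i)) (F P0) (fun i => fmap F (p0 i)) ->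
  is_prod Y P p -> is_prod (fun i => F (Y i)) (F P) (fun i => fmap F (p i)).
Proof.
move=> h0 hF0 h X f.
have [u [hu _]] := h0 P p.
have [v [hv _]] := h P0 p0.
have vu : cmp v u = idm P.
  have [w [_ uw]] := h P p.
  have H1 : forall i, cmp (p i) (cmp v u) = p i by move=> i; rewrite -cmpA hv hu.
  have H2 : forall i, cmp (p i) (idm P) = p i by move=> i; rewrite cmp1r.
  by rewrite -(uw _ H1) (uw _ H2).
have [h0' [hh0 uh0]] := hF0 X f.
exists (cmp (fmap F v) h0'); split.
  by move=> i; rewrite -cmpA -fmap_cmp hv; exact: hh0.
move=> h' hh'.
have e : h0' = cmp (fmap F u) h'.
  by apply: uh0 => i; rewrite -cmpA -fmap_cmp hu; exact: hh'.
by rewrite e -cmpA -fmap_cmp vu fmap_id cmp1l.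
Qed.

Lemma preserves_by_some (C D : Cat) (F : Functor C D) :
  (forall n (Y : 'I_n -> ob C), exists P0 p0, is_prod Y P0 p0 /\
     is_prod (fun i => F (Y i)) (F P0) (fun i => fmap F (p0 i))) ->
  preserves_products F.
Proof. move=> H n Y P p hp; have [P0 [p0 [h0 h1]]] := H n Y; exact: prod_transfer h0 h1 hp. Qed.

Section Quot.
Variables (C : Cat) (R : congruence C).

Lemma quot_prod n (Y : 'I_n -> ob C) P p : is_prod Y P p ->
  is_prod (C := quot_cat R) Y P (fun i => qcl R (p i)).
Proof.
move=> hp X f.
have [h [hh uh]] := hp X (fun i => qrep (f i)).
exists (qcl R h); split.
  by move=> i /=; rewrite qcmp_cl hh qrepK.
move=> h' hh'; rewrite -(qrepK h'); apply: qcl_eq.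
apply: (cprod hp (f := fun i => qrep (f i)) (g := fun i => cmp (p i) (qrep h'))) => // i.
have := hh' i; rewrite -(qrepK h') /= qcmp_cl => <-.
rewrite qrepK; exact: qrep_rel.
Qed.

Lemma quot_preserves : preserves_products (quot_functor R).
Proof. move=> n Y P p hp; exact: quot_prod. Qed.

Lemma quot_epi (D : Cat) (F G : Functor (quot_cat R) D) :
  fcomp F (quot_functor R) = fcomp G (quot_functor R) -> F = G.
Proof.
move=> H; apply: functor_eq_conv.
  exact: (f_equal (@fobj _ _) H).
move=> x y K; rewrite -(qrepK K); exact: (functor_JMeq H (qrep K)).
Qed.
End Quot.

Lemma quot_has_products (T : Theory) (R : congruence T) : has_finite_products (quot_cat R).
Proof.
move=> n Y; have [P [p hp]] := th_prod (t:=T) Y.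
exists P, (fun i => qcl R (p i)); exact: quot_prod.
Qed.

Section Ker.
Variables (T Q : Theory) (M : TheoryMor T Q).

Definition kerR : congruence T.
refine (@MkCongruence T (fun x y f g => fmap M f = fmap M g) _ _ _ _ _).
- by [].
- by move=> x y f g ->.
- by move=> x y f g h -> ->.
- by move=> x y z f f' g g' h1 h2; rewrite !fmap_cmp h1 h2.
- move=> n Y P p hp X f g hf hg hfg e1 e2.
  have [h [_ uh]] := tpres (t := M) hp (fun i => fmap M (f i)).
  have H1 : forall i, cmp (fmap M (p i)) (fmap M hf) = fmap M (f i).
    by move=> i; rewrite -fmap_cmp e1.
  have H2 : forall i, cmp (fmap M (p i)) (fmap M hg) = fmap M (f i).
    by move=> i; rewrite -fmap_cmp e2 hfg.
  by rewrite -(uh _ H1) (uh _ H2).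
Defined.

Definition Nmap x y (K : qhom kerR x y) : hom Q (M x) (M y) := fmap M (qrep K).
Lemma Nmap_cl x y (f : hom T x y) : Nmap (qcl kerR f) = fmap M f.
Proof. exact: (qrep_rel kerR f). Qed.
Lemma Nmap_id x : Nmap (qcl kerR (idm x)) = idm (M x).
Proof. by rewrite Nmap_cl fmap_id. Qed.
Lemma Nmap_cmp x y z (g : qhom kerR y z) (f : qhom kerR x y) :
  Nmap (qcmp g f) = cmp (Nmap g) (Nmap f).
Proof. by rewrite /qcmp Nmap_cl fmap_cmp. Qed.

Definition Nf : Functor (quot_cat kerR) Q :=
  @MkFunctor (quot_cat kerR) Q (fun x => M x) Nmap Nmap_id Nmap_cmp.

Lemma M_eq : tfun M = fcomp Nf (quot_functor kerR).
Proof. apply: functor_eq_conv => // x y f /=; by rewrite Nmap_cl. Qed.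

Lemma Nf_pres : preserves_products Nf.
Proof.
apply: preserves_by_some => n Y.
have [P0 [p0 hp0]] := th_prod (t:=T) Y.
exists P0, (fun i => qcl kerR (p0 i)); split; first exact: quot_prod.
rewrite /=.
have -> : (fun i => Nmap (qcl kerR (p0 i))) = (fun i => fmap M (p0 i)).
  by apply: functional_extensionality_dep => i; exact: Nmap_cl.
exact: tpres hp0.
Qed.
End Ker.

Lemma qcl_JMeq (T Q : Theory) (M : TheoryMor T Q) a b a' b' (g : hom T a b) (g' : hom T a' b') :
  a = a' -> b = b' -> JMeq (fmap M g) (fmap M g') -> JMeq (qcl (kerR M) g) (qcl (kerR M) g').
Proof.
move=> ea eb; subst a' b' => hj; have e := JMeq_eq hj.
by rewrite (qcl_eq (R := kerR M) e).
Qed.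

Lemma one_to_two (T Q : Theory) (M : TheoryMor T Q) : lawvere_covariety M ->
  exists (R : congruence T) (N : Functor (quot_cat R) Q),
    theory_iso N /\ tfun M = fcomp N (quot_functor R).
Proof.
move=> [S [hL [hcos huniv]]].
pose Tq := MkTheory (quot_has_products (R:=kerR M)).
pose Cq : TheoryMor T Tq := @MkTheoryMor T Tq (quot_functor (kerR M)) (quot_preserves (R:=kerR M)).
have hC : cosolution S Cq.
  move=> i.
  have hPQ : forall y, cs_lhs S i y = cs_rhs S i y.
    move=> y; have [T'' [U [hs hU]]] := hL i.
    have [x <-] := hs y.
    exact: (functor_obj (f_equal (@tfun _ _) hU) x).
  apply: theorymor_eq; apply: functor_eq_conv.
    by apply: functional_extensionality => y /=.
  move=> x y f /=; apply: qcl_JMeq; try exact: hPQ.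
  exact: (functor_JMeq (f_equal (@tfun _ _) (hcos i)) f).
have [a' [ha' ua']] := huniv Tq Cq hC.
pose NT : TheoryMor Tq Q := @MkTheoryMor Tq Q (Nf M) (Nf_pres (M:=M)).
have [b [hb ub]] := huniv Q M hcos.
have e1 : tcomp NT a' = tid Q.
  rewrite -(ub (tcomp NT a')) ?(ub (tid Q)) //; first by rewrite tcomp_idl.
  rewrite tcompA -ha'; apply: theorymor_eq; exact: M_eq.
have e2 : fcomp (tfun a') (Nf M) = fid (quot_cat (kerR M)).
  apply: quot_epi; rewrite fcompA -(M_eq M) fcomp_idl.
  exact: (esym (f_equal (@tfun _ _) ha')).
exists (kerR M), (Nf M); split; last exact: M_eq.
split; first exact: Nf_pres.
exists (tfun a'); split; first exact: (tpres (t:=a')).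
split; first exact: e2.
exact: (f_equal (@tfun _ _) e1).
Qed.

Section KP.
Variables (T Q : Theory) (M : TheoryMor T Q).

Definition khom (x y : ob T) :=
  {fg : hom T x y * hom T x y | fmap M fg.1 = fmap M fg.2}.

Lemma khom_eq x y (a b : khom x y) : sval a = sval b -> a = b.
Proof. move=> e; apply: eq_sig_hprop => // P; exact: proof_irrelevance. Qed.

Definition kcmp x y z (g : khom y z) (f : khom x y) : khom x z.
Proof.
exists (cmp (sval g).1 (sval f).1, cmp (sval g).2 (sval f).2).
by rewrite /= !fmap_cmp (proj2_sig g) (proj2_sig f).
Defined.

Definition kid x : khom x x := exist _ (idm x, idm x) erefl.

Lemma kcmpA x y z w (h : khom z w) (g : khom y z) (f : khom x y) :
  kcmp (kcmp h g) f = kcmp h (kcmp g f).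
Proof. by apply: khom_eq => /=; rewrite !cmpA. Qed.
Lemma kcmp1l x y (f : khom x y) : kcmp (kid y) f = f.
Proof. apply: khom_eq => /=; rewrite !cmp1l; by case: (sval f). Qed.
Lemma kcmp1r x y (f : khom x y) : kcmp f (kid x) = f.
Proof. apply: khom_eq => /=; rewrite !cmp1r; by case: (sval f). Qed.

Definition KC : Cat := @MkCat (ob T) khom kcmp kid kcmpA kcmp1l kcmp1r.

Definition kdiag x y (f : hom T x y) : khom x y := exist _ (f, f) erefl.

Lemma kprod n (Y : 'I_n -> ob T) P p : is_prod Y P p ->
  is_prod (C := KC) Y P (fun i => kdiag (p i)).
Proof.
move=> hp X f.
have [h1 [hh1 uh1]] := hp X (fun i => (sval (f i)).1).
have [h2 [hh2 uh2]] := hp X (fun i => (sval (f i)).2).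
have e : fmap M h1 = fmap M h2.
  have [h [_ uh]] := tpres (t := M) hp (fun i => fmap M (sval (f i)).1).
  have H1 : forall i, cmp (fmap M (p i)) (fmap M h1) = fmap M (sval (f i)).1.
    by move=> i; rewrite -fmap_cmp hh1.
  have H2 : forall i, cmp (fmap M (p i)) (fmap M h2) = fmap M (sval (f i)).1.
    by move=> i; rewrite -fmap_cmp hh2 (proj2_sig (f i)).
  by rewrite -(uh _ H1) (uh _ H2).
exists (exist _ (h1, h2) e : khom X P); split.
  move=> i; apply: khom_eq => /=; rewrite hh1 hh2; by case: (sval (f i)).
case=> [[a b] hab] hh'; apply: khom_eq => /=.
congr pair.
  apply: uh1 => i; exact: (f_equal (fun k : khom X (Y i) => (sval k).1) (hh' i)).
apply: uh2 => i; exact: (f_equal (fun k : khom X (Y i) => (sval k).2) (hh' i)).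
Qed.

Lemma KC_products : has_finite_products KC.
Proof.
move=> n Y; have [P [p hp]] := th_prod (t:=T) Y.
exists P, (fun i => kdiag (p i)); exact: kprod.
Qed.

Definition KT : Theory := MkTheory KC_products.

Definition P1f : Functor KC T :=
  @MkFunctor KC T (fun x => x) (fun x y f => (sval f).1) (fun x => erefl) (fun _ _ _ _ _ => erefl).
Definition P2f : Functor KC T :=
  @MkFunctor KC T (fun x => x) (fun x y f => (sval f).2) (fun x => erefl) (fun _ _ _ _ _ => erefl).
Lemma kdiag_cmp x y z (g : hom T y z) (f : hom T x y) :
  kdiag (cmp g f) = kcmp (kdiag g) (kdiag f).
Proof. by apply: khom_eq. Qed.
Definition Sf : Functor T KC :=
  @MkFunctor T KC (fun x => x) kdiag (fun x => erefl) kdiag_cmp.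

Lemma P1_pres : preserves_products P1f.
Proof.
apply: preserves_by_some => n Y; have [P0 [p0 hp0]] := th_prod (t:=T) Y.
exists P0, (fun i => kdiag (p0 i)); split; [exact: kprod | exact: hp0].
Qed.
Lemma P2_pres : preserves_products P2f.
Proof.
apply: preserves_by_some => n Y; have [P0 [p0 hp0]] := th_prod (t:=T) Y.
exists P0, (fun i => kdiag (p0 i)); split; [exact: kprod | exact: hp0].
Qed.
Lemma S_pres : preserves_products Sf.
Proof. move=> n Y P p hp; exact: kprod. Qed.

Definition P1T : TheoryMor KT T := @MkTheoryMor KT T P1f P1_pres.
Definition P2T : TheoryMor KT T := @MkTheoryMor KT T P2f P2_pres.
Definition ST : TheoryMor T KT := @MkTheoryMor T KT Sf S_pres.

Lemma P1S : tcomp P1T ST = tid T.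
Proof. by apply: theorymor_eq; apply: functor_eq_conv. Qed.
Lemma P2S : tcomp P2T ST = tid T.
Proof. by apply: theorymor_eq; apply: functor_eq_conv. Qed.

Lemma KP_refl : reflexive_pair P1T P2T.
Proof. exists ST; split; [exact: P1S | exact: P2S]. Qed.

Lemma KP_lawvere : lawvere_equation P1T P2T.
Proof.
exists T, ST; split; first by move=> y; exists y.
by rewrite P1S P2S.
Qed.
End KP.

Section Lift.
Variables (T : Theory) (R : congruence T) (B : Theory) (a : TheoryMor T B).
Hypothesis keyR : forall x y (f g : hom T x y), R _ _ f g -> fmap a f = fmap a g.

Definition Lmap x y (K : qhom R x y) : hom B (a x) (a y) := fmap a (qrep K).
Lemma Lmap_cl x y (f : hom T x y) : Lmap (qcl R f) = fmap a f.
Proof. exact: keyR (qrep_rel R f). Qed.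
Lemma Lmap_id x : Lmap (qcl R (idm x)) = idm (a x).
Proof. by rewrite Lmap_cl fmap_id. Qed.
Lemma Lmap_cmp x y z (g : qhom R y z) (f : qhom R x y) :
  Lmap (qcmp g f) = cmp (Lmap g) (Lmap f).
Proof. by rewrite /qcmp Lmap_cl fmap_cmp. Qed.

Definition Lf : Functor (quot_cat R) B :=
  @MkFunctor (quot_cat R) B (fun x => a x) Lmap Lmap_id Lmap_cmp.

Lemma Lf_comp : fcomp Lf (quot_functor R) = tfun a.
Proof. apply: functor_eq_conv => // x y f /=; by rewrite Lmap_cl. Qed.

Lemma Lf_pres : preserves_products Lf.
Proof.
apply: preserves_by_some => n Y.
have [P0 [p0 hp0]] := th_prod (t:=T) Y.
exists P0, (fun i => qcl R (p0 i)); split; first exact: quot_prod.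
rewrite /=.
have -> : (fun i => Lmap (qcl R (p0 i))) = (fun i => fmap a (p0 i)).
  by apply: functional_extensionality_dep => i; exact: Lmap_cl.
exact: tpres hp0.
Qed.
End Lift.

Lemma two_coeq (T Q : Theory) (M : TheoryMor T Q) (R : congruence T)
  (N : Functor (quot_cat R) Q) :
  theory_iso N -> tfun M = fcomp N (quot_functor R) ->
  coequalizer (P1T M) (P2T M) M.
Proof.
move=> [NP [G [GP [GN NG]]]].
case: M => Mf Mp /= hM; subst Mf.
set M := MkTheoryMor Mp.
split.
  apply: theorymor_eq; apply: functor_eq_conv => // x y f /=.
  have e := proj2_sig f; simpl in e. by rewrite e.
move=> B a ha.
have key : forall x y (f g : hom T x y), fmap M f = fmap M g -> fmap a f = fmap a g.
  move=> x y f g e.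
  exact: (JMeq_eq (functor_JMeq (f_equal (@tfun _ _) ha) (exist _ (f, g) e : khom M x y))).
have keyR : forall x y (f g : hom T x y), R _ _ f g -> fmap a f = fmap a g.
  move=> x y f g r; apply: key => /=; by rewrite (qcl_eq r).
pose Tq := MkTheory (quot_has_products (R:=R)).
pose LT : TheoryMor Tq B := @MkTheoryMor Tq B (@Lf _ _ _ _ keyR) (@Lf_pres _ _ _ _ keyR).
pose GT : TheoryMor Q Tq := @MkTheoryMor Q Tq G GP.
have ea : a = tcomp (tcomp LT GT) M.
  apply: theorymor_eq.
  change (tfun a = fcomp (fcomp (@Lf _ _ _ _ keyR) G) (fcomp N (quot_functor R))).
  rewrite fcompA -(fcompA G N) GN fcomp_idl (@Lf_comp _ _ _ _ keyR) //.
exists (tcomp LT GT); split; first exact: ea.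
move=> b hb.
have h : fcomp (tfun (tcomp LT GT)) (fcomp N (quot_functor R)) =
         fcomp (tfun b) (fcomp N (quot_functor R)).
  change (tfun (tcomp (tcomp LT GT) M) = tfun (tcomp b M)).
  by rewrite -hb -ea.
rewrite -!fcompA in h.
have h2 := quot_epi h.
apply: theorymor_eq.
rewrite -(fcomp_idr (tfun (tcomp LT GT))) -(fcomp_idr (tfun b)) -NG -!fcompA h2 //.
Qed.

Lemma coeq_cov T' T V (P P' : TheoryMor T' T) (M : TheoryMor T V) :
  lawvere_equation P P' -> coequalizer P P' M -> lawvere_covariety M.
Proof.
move=> hL [h1 h2].
exists (@MkCosystem T unit (inhabits tt) (fun _ => T') (fun _ => P) (fun _ => P')).
split; first by move=> i.
split; first by move=> i.
move=> B a ha; exact: h2 B a (ha tt).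
Qed.

Theorem mainTheorem2 (T Q : Theory) (M : TheoryMor T Q) :
  (lawvere_covariety M <->
   exists (R : congruence T) (N : Functor (quot_cat R) Q),
     theory_iso N /\ tfun M = fcomp N (quot_functor R)) /\
  ((exists (R : congruence T) (N : Functor (quot_cat R) Q),
     theory_iso N /\ tfun M = fcomp N (quot_functor R)) <->
   exists (T' : Theory) (P P' : TheoryMor T' T),
     reflexive_pair P P' /\ lawvere_equation P P' /\ coequalizer P P' M).
Proof.
split; split.
- exact: one_to_two.
- move=> [R [N [hN hM]]].
  exact: coeq_cov (KP_lawvere M) (two_coeq hN hM).
- move=> [R [N [hN hM]]].
  exists (KT M), (P1T M), (P2T M); split; first exact: KP_refl.
  split; first exact: KP_lawvere.
  exact: two_coeq hN hM.
- move=> [T' [P [P' [_ [hL hC]]]]]; apply: one_to_two; exact: coeq_cov hL hC.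
Qed.
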